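(* Let $k$ be a positive integer and let $G$ be a finite graph whose vertex set is partitioned into cliques $V_1,\ldots,V_r$. Suppose that for every $i \in \{1,\ldots,r\}$ and every $v \in V_i$, the number of neighbours of $v$ outside $V_i$ is at most $\min\{k, |V_i|-k\}$. Then $G$ contains a stable set of size $r$.
   Context: A stable set is a set of pairwise non-adjacent vertices. *)

(* Defs.v *)
From mathcomp Require Import all_boot.
Set Implicit Arguments. Unset Strict Implicit. Unset Printing Implicit Defensive.

Definition simple_graph (T : finType) (e : rel T) : Prop :=
  symmetric e /\ irreflexive e.

Definition is_clique (T : finType) (e : rel T) (A : {set T}) : Prop :=
  forall x y, x \in A -> y \in A -> x != y -> e x y.

Definition is_stable (T : finType) (e : rel T) (S : {set T}) : Prop :=
  forall x y, x \in S -> y \in S -> ~~ e x y.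

Definition nbhd (T : finType) (e : rel T) (v : T) : {set T} := [set u | e v u].

(* Main.v *)
Require Import Defs.
From mathcomp Require Import all_boot zify.
Set Implicit Arguments. Unset Strict Implicit. Unset Printing Implicit Defensive.

Definition hor (B : nat) (ds : seq nat) := foldl (fun a d => a * B + d) 0 ds.

Lemma hor_gen B s a : foldl (fun a d => a * B + d) a s = a * B ^ size s + hor B s.
Proof.
rewrite /hor; elim: s a => [|d s IH] a /=; first by rewrite expn0 muln1 addn0.
rewrite IH [in RHS]IH expnS; lia.
Qed.

Lemma hor_cat B s1 s2 : hor B (s1 ++ s2) = hor B s1 * B ^ size s2 + hor B s2.
Proof. by rewrite {1}/hor foldl_cat hor_gen. Qed.

Lemma hor_lt B s : all (fun d => d < B) s -> hor B s < B ^ size s.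
Proof.
elim/last_ind: s => [|s d IH] /=; first by rewrite expn0.
rewrite all_rcons => /andP [hd hs].
have e : hor B [:: d] = d by rewrite /hor /= mul0n add0n.
rewrite -cats1 hor_cat size_cat /= e expnD !expn1.
have h := IH hs.
have : (hor B s).+1 * B <= B ^ size s * B by rewrite leq_mul2r h orbT.
lia.
Qed.

Lemma hor_lex B L l (f g : nat -> nat) :
  l < L -> (forall j, j < L -> g j < B) -> (forall j, j < l -> f j = g j) -> g l < f l ->
  hor B (map g (iota 0 L)) < hor B (map f (iota 0 L)).
Proof.
move=> lL gB fg gf.
have -> : L = l + (1 + (L - l.+1)) by lia.
rewrite !iotaD !map_cat !hor_cat.
have -> : [seq g i | i <- iota 0 l] = [seq f i | i <- iota 0 l].
  by apply/eq_in_map => j; rewrite mem_iota => /andP [_ hj]; rewrite fg.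
rewrite !size_cat !size_map !size_iota !add0n ltn_add2l.
have e1 : forall h : nat -> nat, hor B [seq h i | i <- iota l 1] = h l.
  by move=> h; rewrite /hor /= mul0n add0n.
rewrite !e1.
set n := L - l.+1.
have h1 : hor B [seq g i | i <- iota (l + 1) n] < B ^ n.
  have := @hor_lt B [seq g i | i <- iota (l + 1) n].
  rewrite size_map size_iota; apply; apply/allP => d /mapP [j]; rewrite mem_iota => /andP [_ hj] ->.
  apply: gB; lia.
have h2 : (g l).+1 * B ^ n <= f l * B ^ n by rewrite leq_mul2r gf orbT.
rewrite mulSn in h2.
apply: (@leq_trans (g l * B ^ n + B ^ n)); first by rewrite ltn_add2l.
by apply: leq_trans (leq_addr _ _); rewrite addnC.
Qed.

Section Graph.
Variables (V I : finType) (p : V -> I) (c : rel V).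
Hypothesis c_sym : symmetric c.
Hypothesis c_part : forall u v, c u v -> p u != p v.
Variable k : nat.
Definition Nb d := [set u | c d u].
Definition part i := [set u | p u == i].
Hypothesis deg1 : forall v, #|Nb v| <= k.
Hypothesis deg2 : forall v, #|Nb v| + k <= #|part (p v)|.

Definition NS (s : seq V) := [set u | has (fun y => c y u) s].
Definition Sof r (T : {set V}) s := r |: p @: (T :&: NS s).
Definition Ys (T : {set V}) x := [set t in T | c x t].
Definition isIT (A : {set V}) (J : {set I}) :=
  [/\ forall a, a \in A -> p a \in J, {in A &, injective p},
      forall i, i \in J -> exists2 a, a \in A & p a = i &
      forall a b, a \in A -> b \in A -> ~~ c a b].

Lemma card_bigcup_seq (s : seq V) (F : V -> {set V}) :
  #|\bigcup_(y <- s) F y| <= \sum_(y <- s) #|F y|.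
Proof.
elim: s => [|y s IH]; first by rewrite !big_nil cards0.
rewrite !big_cons; apply: leq_trans (leq_card_setU _ _) _; by rewrite leq_add2l.
Qed.

Lemma card_preim (X : {set I}) : #|[set u | p u \in X]| = \sum_(i in X) #|part i|.
Proof.
rewrite -sum1_card (partition_big p (mem X)) /=; last by move=> u; rewrite inE.
apply: eq_bigr => i iX; rewrite -sum1_card; apply: eq_bigl => u.
by rewrite !inE; case: (eqVneq (p u) i) => [->|]; rewrite ?iX ?andbT ?andbF.
Qed.

Lemma count_false (S : {set I}) (T : {set V}) (xs : seq V) r :
  r \in S -> (exists v, p v = r) -> {in T &, injective p} ->
  (forall i, i \in S :\ r -> exists2 t, t \in T & p t = i) ->
  (forall t, t \in T -> p t != r) -> size xs < #|S| ->
  (forall u, p u \in S -> (exists2 t, t \in T & (p t \in S) && c t u) \/ u \in NS xs) ->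
  False.
Proof.
move=> rS [v0 pv0] injT covT Tr szS dom.
set TS := [set t in T | p t \in S].
set VS := [set u | p u \in S].
have imTS : p @: TS = S :\ r.
  apply/eqP; rewrite eqEsubset; apply/andP; split.
    apply/subsetP => i /imsetP [t]; rewrite inE => /andP [tT tS] ->.
    by rewrite !inE tS Tr.
  apply/subsetP => i iS; have [t tT pt] := covT i iS.
  apply/imsetP; exists t => //; rewrite inE tT pt; by move: iS; rewrite inE => /andP [].
have injTS : {in TS &, injective p}.
  by move=> a b; rewrite !inE => /andP [aT _] /andP [bT _]; apply: injT.
have cTS : #|TS| = #|S| - 1.
  by rewrite -(card_in_imset injTS) imTS (cardsD1 r S) rS; lia.
have h1 : VS \subset (\bigcup_(t in TS) Nb t) :|: \bigcup_(y <- xs) Nb y.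
  apply/subsetP => u; rewrite inE => /dom [[t tT /andP [tS ctu]]|].
    by apply/setUP; left; apply/bigcupP; exists t; rewrite !inE ?tT ?tS.
  rewrite inE => /hasP [y yxs cyu].
  apply/setUP; right; rewrite (big_rem y yxs) /=; apply/setUP; left.
  by rewrite inE.
have h2 : #|VS| <= \sum_(t in TS) #|Nb t| + \sum_(y <- xs) #|Nb y|.
  apply: leq_trans (subset_leq_card h1) _.
  apply: leq_trans (leq_card_setU _ _) _; apply: leq_add; last exact: card_bigcup_seq.
  rewrite -big_enum; apply: leq_trans (card_bigcup_seq _ _) _.
  by rewrite big_enum.
have h3 : \sum_(y <- xs) #|Nb y| <= size xs * k.
  elim: (xs) => [|y s IH]; first by rewrite big_nil.
  by rewrite big_cons /= mulSn leq_add.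
have h4 : \sum_(t in TS) (#|Nb t| + k) <= \sum_(t in TS) #|part (p t)|.
  by apply: leq_sum => t _; apply: deg2.
rewrite big_split /= sum_nat_const in h4.
have h5 : #|VS| = #|part r| + \sum_(t in TS) #|part (p t)|.
  rewrite /VS card_preim (bigD1 r) //=; congr (_ + _).
  rewrite -(big_imset (fun i => #|part i|) injTS) /= imTS.
  by apply: eq_bigl => i; rewrite !inE andbC.
have h6 : 0 < #|part r| by apply/card_gt0P; exists v0; rewrite inE pv0.
have h7 : size xs * k <= #|TS| * k by rewrite leq_mul2r; apply/orP; right; lia.
lia.
Qed.


Lemma NS_rcons s x : NS (rcons s x) = NS s :|: Nb x.
Proof. by apply/setP => u; rewrite !inE has_rcons orbC. Qed.

Lemma NS_take_mono (s : seq V) j1 j2 : j1 <= j2 -> NS (take j1 s) \subset NS (take j2 s).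
Proof.
move=> h; apply/subsetP => u; rewrite !inE => /hasP [y yin cyu].
apply/hasP; exists y => //; move: yin; rewrite -(take_takel _ h); exact: mem_take.
Qed.

Section Algo.
Variables (J : {set I}) (r : I) (x0 : V).
Hypothesis rJ : r \in J.
Hypothesis Jne : forall i, i \in J -> exists v, p v = i.

Definition valid (T : {set V}) (xs : seq V) : Prop :=
  isIT T (J :\ r) /\ forall j, j < size xs ->
   [/\ p (nth x0 xs j) \in Sof r T (take j xs),
       forall t, t \in T -> p t \in Sof r T (take j xs) -> ~~ c t (nth x0 xs j),
       nth x0 xs j \notin NS (take j xs) &
       j.+1 < size xs -> Ys T (nth x0 xs j) != set0].

Definition dig T xs j := if j < size xs then #|Ys T (nth x0 xs j)| else #|V|.+1.
Definition pot T xs := hor #|V|.+2 (map (dig T xs) (iota 0 #|J|)).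

Lemma dig_lt T xs j : dig T xs j < #|V|.+2.
Proof. by rewrite /dig; case: ifP => // _; rewrite ltnS (leq_trans (max_card _)). Qed.

Lemma Sof_sub T s : isIT T (J :\ r) -> Sof r T s \subset J.
Proof.
case=> TJ _ _ _; apply/subsetP => i; rewrite !inE => /orP [/eqP ->//|/imsetP [t]].
by rewrite inE => /andP [tT _] ->; have := TJ t tT; rewrite inE => /andP [].
Qed.

Lemma growth T xs j : valid T xs -> j <= size xs ->
  (forall i, i < j -> Ys T (nth x0 xs i) != set0) -> j < #|Sof r T (take j xs)|.
Proof.
move=> [hT hv]; elim: j => [|j IH] hj hne.
  by rewrite take0; apply/card_gt0P; exists r; rewrite !inE eqxx.
have jl : j < size xs by [].
apply: leq_ltn_trans (IH (ltnW hj) (fun i hi => hne i (ltnW hi))) _.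
apply: proper_card; apply/properP; split.
  rewrite /Sof; apply: setUS; apply: imsetS; apply: setIS; exact: NS_take_mono.
have /set0Pn [t] := hne j (ltnSn j); rewrite inE => /andP [tT cxt].
exists (p t).
  rewrite /Sof !inE; apply/orP; right; apply/imsetP; exists t => //.
  by rewrite inE tT (take_nth x0 jl) NS_rcons inE; apply/orP; right; rewrite inE.
apply/negP => ht; have [_ hb _ _] := hv j jl.
by have := hb t tT ht; rewrite c_sym cxt.
Qed.


Lemma take_rcons_le (s : seq V) x j : j <= size s -> take j (rcons s x) = take j s.
Proof.
move=> h; rewrite -cats1 take_cat; case: ltnP => h2 //.
have -> : j = size s by apply/eqP; rewrite eqn_leq h h2.
by rewrite subnn take0 cats0 take_size.
Qed.

Lemma extend T xs u : valid T xs ->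
  (forall i, i < size xs -> Ys T (nth x0 xs i) != set0) ->
  p u \in Sof r T xs -> (forall t, t \in T -> p t \in Sof r T xs -> ~~ c t u) ->
  u \notin NS xs -> valid T (rcons xs u) /\ pot T (rcons xs u) < pot T xs.
Proof.
move=> hval hne hu1 hu2 hu3.
have [hT hv] := hval.
have szJ : size xs < #|J|.
  apply: leq_trans (growth hval (leqnn _) hne) _.
  rewrite take_size; apply: subset_leq_card; exact: Sof_sub.
split.
  split => // j; rewrite size_rcons ltnS => hj.
  rewrite nth_rcons take_rcons_le //.
  case: ltnP => hj2.
    have [a1 a2 a3 a4] := hv j hj2; split => // _; exact: hne.
  have ej : j = size xs by apply/eqP; rewrite eqn_leq hj hj2.
  rewrite ej eqxx take_size; split => //; by rewrite ltnn.
apply: (@hor_lex _ _ (size xs)) => //.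
- move=> j _; exact: dig_lt.
- move=> j hj; rewrite /dig size_rcons ltnS (ltnW hj) hj nth_rcons hj //.
- rewrite /dig size_rcons ltnSn ltnn nth_rcons ltnn eqxx ltnS; exact: max_card.
Qed.


Lemma swap T xs : valid T xs -> 0 < size xs -> Ys T (nth x0 xs (size xs).-1) = set0 ->
  (exists A, isIT A J) \/ (exists T' xs', valid T' xs' /\ pot T' xs' < pot T xs).
Proof.
move=> hval hm hY; have [hT hv] := hval; case: (hT) => TJ Tinj Tcov Tind.
set j := (size xs).-1.
have jl : j < size xs by rewrite /j; case: (size xs) hm.
set x := nth x0 xs j.
have [a1 a2 a3 _] := hv j jl.
rewrite -/x in a1 a2 a3.
have xT : forall t, t \in T -> ~~ c x t.
  move=> t tT; apply/negP => cxt.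
  have : t \in Ys T x by rewrite inE tT cxt.
  by rewrite /x hY inE.
have cxx : forall y, ~~ c y y by move=> y; apply/negP => /c_part; rewrite eqxx.
move: a1; rewrite /Sof in_setU1 => /orP [/eqP pxr | /imsetP [t]].
  left; exists (x |: T); split.
  - move=> a; rewrite in_setU1 => /orP [/eqP -> | aT]; first by rewrite pxr.
    by have := TJ a aT; rewrite inE => /andP [].
  - move=> a b; rewrite !in_setU1 => /orP [/eqP -> | aT] /orP [/eqP -> | bT] //.
    + by move=> h; have := TJ b bT; rewrite in_setD1 -h pxr eqxx.
    + by move=> h; have := TJ a aT; rewrite in_setD1 h pxr eqxx.
    + exact: Tinj.
  - move=> i iJ; case: (eqVneq i r) => [->|ir].
      by exists x; rewrite ?in_setU1 ?eqxx.
    have iJr : i \in J :\ r by rewrite in_setD1 ir iJ.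
    have [t tT pt] := Tcov i iJr.
    by exists t => //; rewrite in_setU1 tT orbT.
  - move=> a b; rewrite !in_setU1 => /orP [/eqP -> | aT] /orP [/eqP -> | bT].
    + exact: cxx.
    + exact: xT.
    + by rewrite c_sym; exact: xT.
    + exact: Tind.
rewrite in_setI => /andP [tT tN] ptx.
right.
set l := find (fun y => c y t) xs.
have hl : l < j by apply: find_ltn; move: tN; rewrite inE.
have hasl : has (fun y => c y t) xs.
  move: tN; rewrite inE => /hasP [y yin cyt]; apply/hasP; exists y => //.
  exact: mem_take yin.
have cl : c (nth x0 xs l) t by exact: (nth_find x0 hasl).
have bl : forall i, i < l -> ~~ c (nth x0 xs i) t.
  by move=> i hi; rewrite (before_find x0 hi).
have tNS : forall i, i <= l -> t \notin NS (take i xs).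
  by move=> i hi; rewrite inE; apply/negP => /find_ltn; rewrite -/l; lia.
have xNS : forall i, i <= j -> x \notin NS (take i xs).
  move=> i hi; apply/negP => h; move/negP: a3; apply.
  by move/subsetP: (NS_take_mono xs hi); apply.
have xnT : x \notin T.
  apply/negP => xT'; have ext : x = t by apply: Tinj.
  by move: a3; rewrite ext tN.
have cyx : forall i, i < j -> ~~ c (nth x0 xs i) x.
  move=> i hi; apply/negP => h; move/negP: a3; apply; rewrite inE; apply/hasP.
  exists (nth x0 xs i) => //; rewrite -(nth_take x0 hi); apply: mem_nth.
  by rewrite size_takel //; apply: ltnW.
have tx : t != x by apply/negP => /eqP ext; move: xnT; rewrite -ext tT.
set T' := x |: (T :\ t).
set xs' := take l.+1 xs.
have hl1 : l.+1 <= size xs by apply: leq_trans jl; apply: leq_trans hl _.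
have szxs' : size xs' = l.+1 by rewrite size_takel.
have SofE : forall i, i <= l -> Sof r T' (take i xs) = Sof r T (take i xs).
  move=> i hi; rewrite /Sof.
  have -> : T' :&: NS (take i xs) = T :&: NS (take i xs); last by [].
  apply/setP => u; rewrite !in_setI in_setU1 in_setD1.
  case: (eqVneq u x) => [->|ux] /=.
    by rewrite (negbTE (xNS i _)) ?andbF //; apply: leq_trans hi (ltnW hl).
  case: (eqVneq u t) => [->|ut] //=.
  by rewrite (negbTE (tNS i hi)) !andbF.
have YsE : forall i, i < l -> Ys T' (nth x0 xs i) = Ys T (nth x0 xs i).
  move=> i hi; apply/setP => u; rewrite !inE.
  case: (eqVneq u x) => [->|ux] /=.
    by rewrite (negbTE (cyx i _)) ?andbF //; apply: ltn_trans hi hl.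
  case: (eqVneq u t) => [->|ut] //=.
  by rewrite (negbTE (bl i hi)) andbF.
have YlE : Ys T' (nth x0 xs l) = Ys T (nth x0 xs l) :\ t.
  apply/setP => u; rewrite !inE.
  case: (eqVneq u x) => [->|ux] /=.
    by rewrite (negbTE (cyx l hl)) !andbF.
  by case: (eqVneq u t).
have hT' : isIT T' (J :\ r).
  split.
  - move=> a; rewrite in_setU1 in_setD1 => /orP [/eqP -> | /andP [_ aT]].
      by rewrite ptx; exact: TJ.
    exact: TJ.
  - move=> a b; rewrite !in_setU1 !in_setD1.
    move=> /orP [/eqP -> | /andP [nat aT]] /orP [/eqP -> | /andP [bt bT]] //.
    + by rewrite ptx => h; move: bt; rewrite (Tinj _ _ tT bT h) eqxx.
    + by rewrite ptx => h; move: nat; rewrite (Tinj _ _ aT tT h) eqxx.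
    + exact: Tinj.
  - move=> i iJ; have [t' t'T pt'] := Tcov i iJ.
    case: (eqVneq t' t) => [et|nt].
      by exists x; rewrite ?in_setU1 ?eqxx // ptx -et.
    by exists t' => //; rewrite in_setU1 in_setD1 nt t'T orbT.
  - move=> a b; rewrite !in_setU1 !in_setD1.
    move=> /orP [/eqP -> | /andP [_ aT]] /orP [/eqP -> | /andP [_ bT]].
    + exact: cxx.
    + exact: xT.
    + by rewrite c_sym; exact: xT.
    + exact: Tind.
have lJ : l < #|J|.
  apply: ltn_trans hl _.
  have := @growth T xs j hval (ltnW jl).
  have hne : forall i, i < j -> Ys T (nth x0 xs i) != set0.
    move=> i hi; have [_ _ _ h4] := hv i (ltn_trans hi jl); apply: h4.
    by move: hi jl; rewrite /j; case: (size xs) => //= n; lia.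
  move/(_ hne) => h; apply: leq_trans h _; apply: subset_leq_card; exact: Sof_sub.
exists T', xs'; split.
  split => // i; rewrite szxs' ltnS => hi.
  rewrite (nth_take x0 (hi : i < l.+1)) (take_takel _ (ltnW (hi : i < l.+1))) SofE //.
  have [b1 b2 b3 b4] := hv i (leq_ltn_trans hi (leq_trans hl1 (leqnn _))).
  split => //.
  - move=> t'; rewrite in_setU1 in_setD1 => /orP [/eqP -> | /andP [_ t'T]]; last exact: b2.
    rewrite ptx /Sof in_setU1 => /orP [/eqP ptr | /imsetP [t'' ]].
      by have := TJ t tT; rewrite in_setD1 ptr eqxx.
    rewrite in_setI => /andP [t''T t''N] e.
    by move: t''N; rewrite -(Tinj _ _ tT t''T e) (negbTE (tNS i hi)).
  - move=> hi2; rewrite YsE; last by [].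
    have h3 : i < l by []. apply: b4; lia.
apply: (@hor_lex _ _ l) => //.
- move=> i _; exact: dig_lt.
- move=> i hi; rewrite /dig szxs' (ltn_trans hi (ltnSn l)).
  rewrite (ltn_trans hi (leq_trans hl1 (leqnn _))) (nth_take x0 (ltn_trans hi (ltnSn l))).
  by rewrite YsE.
- rewrite /dig szxs' ltnSn (leq_trans hl1 (leqnn _)) (nth_take x0 (ltnSn l)) YlE.
  by rewrite (cardsD1 t (Ys T _)) inE tT cl.
Qed.

Lemma algo n : forall T xs, pot T xs < n -> valid T xs -> exists A, isIT A J.
Proof.
elim: n => [|n IH] T xs //= hp hval.
have [hT hv] := hval; case: (hT) => TJ Tinj Tcov Tind.
case: (boolP ((0 < size xs) && (Ys T (nth x0 xs (size xs).-1) == set0))).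
  case/andP => hm /eqP hY.
  case: (swap hval hm hY) => // [[T' [xs' [hv' hp']]]].
  apply: (IH T' xs') => //; exact: leq_trans hp' hp.
move=> hcase.
have hne : forall i, i < size xs -> Ys T (nth x0 xs i) != set0.
  move=> i hi; case: (ltnP i.+1 (size xs)) => h.
    by have [_ _ _ h4] := hv i hi; apply: h4.
  have ei : i = (size xs).-1 by lia.
  have sp : 0 < size xs by lia.
  by move: hcase; rewrite -ei sp.
case: (boolP [exists u, [&& p u \in Sof r T xs,
     [forall t in T, (p t \in Sof r T xs) ==> ~~ c t u] & u \notin NS xs]]).
  case/existsP => u /and3P [hu1 /forall_inP hu2 hu3].
  have [hv' hp'] := extend hval hne hu1 (fun t tT ht => implyP (hu2 t tT) ht) hu3.
  apply: (IH T (rcons xs u)) => //; exact: leq_trans hp' hp.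
move=> hstuck; exfalso.
apply: (@count_false (Sof r T xs) T xs r).
- by rewrite /Sof in_setU1 eqxx.
- exact: Jne.
- exact: Tinj.
- move=> i; rewrite in_setD1 => /andP [ir iS]; apply: Tcov.
  rewrite in_setD1 ir /=; move/subsetP: (Sof_sub xs hT); apply; exact: iS.
- by move=> t tT; have := TJ t tT; rewrite in_setD1 => /andP [].
- have := growth hval (leqnn _) hne; by rewrite take_size.
- move=> u hu; move/existsPn: hstuck => /(_ u); rewrite hu /= negb_and negbK.
  case/orP => [/forall_inPn [t tT] | ->]; last by right.
  rewrite negb_imply negbK => /andP [h1 h2]; left; exists t => //; by rewrite h1.
Qed.

End Algo.

Lemma IT_exists (J : {set I}) : (forall i, i \in J -> exists v, p v = i) -> exists A, isIT A J.
Proof.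
move: {2}#|J| (leqnn #|J|) => n; elim: n J => [|n IH] J hJ hne.
  have -> : J = set0 by apply/eqP; rewrite -cards_eq0; lia.
  exists set0; split => //; try by move=> a; rewrite inE.
case: (set_0Vmem J) => [->|[r rJ]].
  exists set0; split => //; try by move=> a; rewrite inE.
have [T hT] : exists T, isIT T (J :\ r).
  apply: IH.
    by move: hJ; rewrite (cardsD1 r J) rJ.
  by move=> i; rewrite in_setD1 => /andP [_ /hne].
have [x0 _] := hne r rJ.
apply: (@algo J r x0 rJ hne (pot J x0 T [::]).+1 T [::]) => //.
Qed.

End Graph.


Theorem theorem4 (T : finType) (e : rel T) (k : nat) (P : {set {set T}}) :
  simple_graph e ->
  0 < k ->
  partition P [set: T] ->
  (forall V, V \in P -> is_clique e V) ->
  (forall V, V \in P -> forall v, v \in V ->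
     (#|nbhd e v :\: V| <= k /\ #|nbhd e v :\: V| + k <= #|V|)) ->
  exists S : {set T}, is_stable e S /\ #|S| = #|P|.
Proof.
move=> [esym eirr] kpos hP hcl hdeg.
case/and3P: hP => /eqP hcov htriv h0.
pose p := pblock P.
pose c := fun u v => e u v && (p u != p v).
have c_sym : symmetric c by move=> u v; rewrite /c esym eq_sym.
have c_part : forall u v, c u v -> p u != p v by move=> u v /andP [].
have mem_cov : forall v, v \in cover P by move=> v; rewrite hcov inE.
have pP : forall v, p v \in P := fun v => pblock_mem (mem_cov v).
have vp : forall v, v \in p v by move=> v; rewrite /p mem_pblock.
have partE : forall v, part p (p v) = p v.
  by move=> v; apply/setP => u; rewrite inE eq_sym (eq_pblock u htriv (mem_cov v)).
have NbE : forall v, Nb c v = nbhd e v :\: p v.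
  move=> v; apply/setP => u; rewrite !inE /c.
  by rewrite -(eq_pblock u htriv (mem_cov v)) andbC.
have deg1 : forall v, #|Nb c v| <= k.
  by move=> v; rewrite NbE; have [] := hdeg (p v) (pP v) v (vp v).
have deg2 : forall v, #|Nb c v| + k <= #|part p (p v)|.
  by move=> v; rewrite NbE partE; have [] := hdeg (p v) (pP v) v (vp v).
have hne : forall B, B \in P -> exists v, p v = B.
  move=> B BP; have : B != set0 by apply/negP => /eqP eB; move: h0; rewrite -eB BP.
  by case/set0Pn => v vB; exists v; apply: def_pblock.
have [A [AP Ainj Acov Aind]] := IT_exists c_sym c_part deg1 deg2 hne.
exists A; split.
  move=> a b aA bA; case: (eqVneq a b) => [->|ab]; first by rewrite eirr.
  have := Aind a b aA bA; rewrite /c negb_and negbK => /orP [//|/eqP h].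
  by move: ab; rewrite (Ainj _ _ aA bA h) eqxx.
have -> : P = [set p a | a in A].
  apply/eqP; rewrite eqEsubset; apply/andP; split; apply/subsetP => B; last first.
    by case/imsetP => a aA ->; exact: AP.
  by move=> BP; have [a aA <-] := Acov B BP; apply/imsetP; exists a.
by rewrite (card_in_imset Ainj).
Qed.
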